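(* Let $0\le\mu\le m$, $\epsilon=2^\mu$, let $\mathbf{r}'=(r'_0,\dots,r'_{2^m-1})\in GF(2^m)^{2^m}$ and let $$\mathbf{S}_1(x)=\sum_{j=0}^{2^m-1} r'_j\frac{s_\mu(x)-s_\mu(\omega_j)}{x-\omega_j}.$$ For $0\le l<2^{m-\mu}$ let $\mathbf{r}'_{l,\epsilon}=(r'_{l\epsilon},r'_{l\epsilon+1},\dots,r'_{l\epsilon+\epsilon-1})$. Then $\mathbf{S}_1(x)=\sum_{j=0}^{\epsilon-1}\sigma_j\bar X_j(x)$, where $$(\sigma_0,\dots,\sigma_{\epsilon-1})=\frac{1}{p_{2^m-2^\mu}}\sum_{l=0}^{2^{m-\mu}-1}\mathrm{IFFT}_{\bar{\mathbb X}}\big(\mathbf{r}'_{l,\epsilon},\mu,\omega_{\epsilon l}\big).$$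
   Context: Fix a basis $\{v_0,\dots,v_{m-1}\}$ of $GF(2^m)$ over $GF(2)$. For $0\le j<2^m$ with binary expansion $j=\sum_{i=0}^{m-1} j_i2^i$, set $\omega_j=\sum_{i=0}^{m-1} j_i v_i$. For $0\le\tau\le m$, $s_\tau(x)=\prod_{j=0}^{2^\tau-1}(x-\omega_j)$. Define $X_j(x)=\prod_{i=0}^{m-1}s_i(x)^{j_i}$, $p_j=\prod_{i=0}^{m-1}s_i(v_i)^{j_i}$ and $\bar X_j(x)=X_j(x)/p_j$; $\bar{\mathbb X}=\{\bar X_0,\dots,\bar X_{2^m-1}\}$ is a basis of polynomials of degree $<2^m$. For $0\le\tau\le m$, $\beta\in GF(2^m)$ and $\mathbf{F}=(F_0,\dots,F_{2^\tau-1})\in GF(2^m)^{2^\tau}$, $\mathrm{IFFT}_{\bar{\mathbb X}}(\mathbf{F},\tau,\beta)$ denotes the coefficient vector $(\bar g_0,\dots,\bar g_{2^\tau-1})$ of the unique polynomial $g(x)=\sum_{j=0}^{2^\tau-1}\bar g_j\bar X_j(x)$ of degree $<2^\tau$ satisfying $g(\omega_j+\beta)=F_j$ for $0\le j<2^\tau$. Fractions $\frac{s_\mu(x)-s_\mu(a)}{x-a}$ denote exact polynomial quotients. *)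

(* Defs.v *)
From HB Require Import structures.
From mathcomp Require Import all_boot all_order all_algebra all_field.
Set Implicit Arguments. Unset Strict Implicit. Unset Printing Implicit Defensive.
Import GRing.Theory.
Local Open Scope ring_scope.

Section Additive.
Variables (F : finFieldType) (m : nat) (v : 'I_m -> F).

Definition bit (j i : nat) : bool := odd (j %/ 2 ^ i).

Definition omega (j : nat) : F := \sum_(i < m) (bit j i)%:R * v i.

Definition spoly (tau : nat) : {poly F} :=
  \prod_(j < 2 ^ tau) ('X - (omega j)%:P).

Definition Xpoly (j : nat) : {poly F} :=
  \prod_(i < m) spoly i ^+ bit j i.

Definition pcoef (j : nat) : F :=
  \prod_(i < m) (spoly i).[v i] ^+ bit j i.

Definition Xbar (j : nat) : {poly F} := (pcoef j)^-1 *: Xpoly j.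

(* IFFT_Xbar(Fv, tau, beta): the coefficient vector (g_0..g_{2^tau-1}) of the
   polynomial g = sum_j g_j Xbar_j with g(omega_j + beta) = Fv_j for all j<2^tau. *)
Definition IFFT (tau : nat) (Fv : 'I_(2 ^ tau) -> F) (beta : F)
  : {ffun 'I_(2 ^ tau) -> F} :=
  odflt 0 [pick g : {ffun 'I_(2 ^ tau) -> F} |
     [forall j : 'I_(2 ^ tau),
        (\sum_(k < 2 ^ tau) g k *: Xbar k).[omega j + beta] == Fv j]].

End Additive.

Definition at_nat (F : finFieldType) (n : nat) (r : 'I_n -> F) (i : nat) : F :=
  odflt 0 (omap r (insub i)).

(* Main.v *)
Require Import Defs.
From HB Require Import structures.
From mathcomp Require Import all_boot all_order all_algebra all_field.
Import GRing.Theory.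
Set Implicit Arguments. Unset Strict Implicit. Unset Printing Implicit Defensive.

Lemma bit_blk n a k i : (k < 2 ^ n)%N ->
  bit (a * 2 ^ n + k) i = if (i < n)%N then bit k i else bit a (i - n).
Proof.
move=> Hk; rewrite /bit; case: ltnP => Hi.
  have E : (2 ^ n = 2 ^ (n - i) * 2 ^ i)%N by rewrite -expnD subnK // ltnW.
  rewrite E mulnA divnMDl ?expn_gt0 // oddD oddM oddX.
  by rewrite subn_eq0 leqNgt Hi /= andbF.
have -> : (2 ^ i = 2 ^ n * 2 ^ (i - n))%N by rewrite -expnD subnKC.
by rewrite divnMA divnMDl ?expn_gt0 // (divn_small Hk) addn0.
Qed.

Lemma bit0n i : bit 0 i = false.
Proof. by rewrite /bit div0n. Qed.

Lemma bit_small k n i : (k < 2 ^ n)%N -> (n <= i)%N -> bit k i = false.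
Proof.
move=> Hk Hi; rewrite /bit divn_small //.
by apply: (leq_trans Hk); rewrite leq_pexp2l.
Qed.

Lemma sum_lt (c : nat -> bool) n : (\sum_(i < n) c i * 2 ^ i < 2 ^ n)%N.
Proof.
elim: n => [|n IH]; first by rewrite big_ord0.
rewrite big_ord_recr /= expnS mul2n -addnn.
rewrite -addSn; apply: leq_add IH _.
by case: (c n); rewrite ?mul1n ?mul0n.
Qed.

Lemma bit_sum (c : nat -> bool) n j :
  bit (\sum_(i < n) c i * 2 ^ i) j = (j < n)%N && c j.
Proof.
elim: n j => [|n IH] j.
  by rewrite big_ord0 bit0n.
rewrite big_ord_recr /= addnC bit_blk ?sum_lt //.
case: ltnP => Hj.
  by rewrite IH Hj ltnS ltnW.
case: (ltngtP j n) => Hjn.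
- by rewrite ltnNge Hj in Hjn.
- rewrite (@bit_small _ 1) //; last by rewrite subn_gt0.
    by rewrite ltnS leqNgt Hjn.
  by case: (c n).
- by rewrite Hjn subnn /bit divn1 ltnSn; case: (c n).
Qed.

Lemma bin_exp n k : (k < 2 ^ n)%N -> \sum_(i < n) bit k i * 2 ^ i = k.
Proof.
elim: n k => [|n IH] k Hk.
  by rewrite big_ord0; move: Hk; rewrite expn0 ltnS leqn0 => /eqP.
rewrite big_ord_recr /=.
have Hm : (k %% 2 ^ n < 2 ^ n)%N by rewrite ltn_mod expn_gt0.
have Hq : (k %/ 2 ^ n < 2)%N by rewrite ltn_divLR ?expn_gt0 // -expnS.
rewrite [in RHS](divn_eq k (2 ^ n)) addnC.
have Hb : forall i, (i < n)%N -> bit k i = bit (k %% 2 ^ n) i.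
  by move=> i Hi; rewrite {1}(divn_eq k (2 ^ n)) bit_blk // Hi.
rewrite (eq_bigr (fun i : 'I_n => bit (k %% 2 ^ n) i * 2 ^ i)%N); last first.
  by move=> i _; rewrite Hb.
rewrite IH // {1}(divn_eq k (2 ^ n)) bit_blk // ltnn subnn /bit divn1.
by congr (_ + _)%N; move: Hq; case: (k %/ 2 ^ n) => [|[|]].
Qed.

Lemma bit_inj n a b : (a < 2 ^ n)%N -> (b < 2 ^ n)%N ->
  (forall i, (i < n)%N -> bit a i = bit b i) -> a = b.
Proof.
move=> Ha Hb H; rewrite -(bin_exp Ha) -(bin_exp Hb).
by apply: eq_bigr => i _; rewrite H.
Qed.

Definition xorn n a b := (\sum_(i < n) (bit a i (+) bit b i) * 2 ^ i)%N.

Lemma xorn_lt n a b : (xorn n a b < 2 ^ n)%N.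
Proof. exact: (sum_lt (fun i => bit a i (+) bit b i)). Qed.

Lemma bit_xorn n a b i : (a < 2 ^ n)%N -> (b < 2 ^ n)%N ->
  bit (xorn n a b) i = bit a i (+) bit b i.
Proof.
move=> Ha Hb; rewrite /xorn (bit_sum (fun i => bit a i (+) bit b i)); case: ltnP => // Hi.
by rewrite (bit_small Ha) // (bit_small Hb).
Qed.

Lemma sum_pow2 n : ((\sum_(i < n) 2 ^ i).+1 = 2 ^ n)%N.
Proof.
elim: n => [|n IH]; first by rewrite big_ord0.
by rewrite big_ord_recr /= -addSn IH expnS mul2n addnn.
Qed.

Lemma bit_top m mu i : (mu <= m)%N -> (i < m)%N ->
  bit (2 ^ m - 2 ^ mu) i = (mu <= i)%N.
Proof.
move=> Hmu Hi.
have E : (2 ^ m - 2 ^ mu = (\sum_(j < m - mu) true * 2 ^ j) * 2 ^ mu + 0)%N.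
  rewrite addn0 (eq_bigr (fun j : 'I_(m - mu) => 2 ^ j)%N); last by move=> j; rewrite mul1n.
  have -> : (2 ^ m = 2 ^ (m - mu) * 2 ^ mu)%N by rewrite -expnD subnK.
  by rewrite -(sum_pow2 (m - mu)) mulSn addKn.
rewrite E bit_blk ?expn_gt0 // bit0n (bit_sum (fun _ => true)) andbT.
case: ltnP => // H; rewrite ltn_sub2r //; exact: leq_ltn_trans H Hi.
Qed.

From mathcomp Require Import zify.
Local Open Scope ring_scope.

Lemma big_blocks (R : Type) (idx : R) (op : Monoid.law idx) a b (f : nat -> R) :
  \big[op/idx]_(0 <= j < a * b) f j =
  \big[op/idx]_(l < a) \big[op/idx]_(k < b) f (l * b + k)%N.
Proof.
elim: a => [|a IH]; first by rewrite mul0n big_geq // big_ord0.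
rewrite mulSnr (@big_cat_nat _ _ _ (a * b)) ?leq_addr //= IH big_ord_recr /=.
congr (op _ _).
rewrite -{1}[(a * b)%N]add0n big_addn addKn big_mkord.
by apply: eq_bigr => k _; rewrite addnC.
Qed.

Section Fld.
Variable F : fieldType.

Lemma poly_eq0_roots (p : {poly F}) (rs : seq F) :
  uniq rs -> all (root p) rs -> (size p <= size rs)%N -> p = 0.
Proof.
move=> U A S; apply/eqP; apply: contraTT S => nz; rewrite -ltnNge.
exact: max_poly_roots.
Qed.

Lemma size_sub_monic (p q : {poly F}) n : p \is monic -> q \is monic ->
  size p = n.+1 -> size q = n.+1 -> (size (p - q)%R <= n)%N.
Proof.
move=> mp mq sp sq; apply/leq_sizeP => j Hj; rewrite coefB.
case: (ltngtP n j) => H.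
- by rewrite !nth_default ?subr0 // ?sp ?sq.
- by rewrite ltnNge Hj in H.
- move: mp mq; rewrite !monicE !lead_coefE sp sq /= -H => /eqP -> /eqP ->.
  by rewrite subrr.
Qed.

Lemma basis_exists (b : nat -> {poly F}) n :
  (forall k, (k < n)%N -> size (b k) = k.+1) ->
  forall p : {poly F}, (size p <= n)%N ->
  exists c : nat -> F, p = \sum_(k < n) c k *: b k.
Proof.
elim: n => [|n IH] Hb p Hp.
  exists (fun _ => 0); rewrite big_ord0.
  by apply/eqP; rewrite -size_poly_eq0 -leqn0.
have Sb := Hb n (ltnSn n).
have lnz : lead_coef (b n) != 0.
  by rewrite lead_coef_eq0 -size_poly_eq0 Sb.
pose a := p`_n / lead_coef (b n).
have Hp' : (size (p - a *: b n)%R <= n)%N.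
  apply/leq_sizeP => j Hj; rewrite coefB coefZ.
  case: (ltngtP n j) => H.
  - by rewrite !nth_default ?mulr0 ?subr0 // ?Sb // (leq_trans Hp).
  - by rewrite ltnNge Hj in H.
  - have -> : (b n)`_j = lead_coef (b n) by rewrite lead_coefE Sb -H.
    by rewrite -H divfK ?subrr.
have [c Hc] := IH (fun k Hk => Hb k (ltnW Hk)) _ Hp'.
exists (fun k => if k == n then a else c k).
rewrite big_ord_recr /= eqxx.
rewrite (eq_bigr (fun k : 'I_n => c k *: b k)); last first.
  by move=> k _; rewrite /= (ltn_eqF (ltn_ord k)).
by rewrite -Hc subrK.
Qed.

Lemma size_prod_monicn n (f : 'I_n -> {poly F}) : (forall i, f i \is monic) ->
  size (\prod_(i < n) f i) = (\sum_(i < n) (size (f i)).-1).+1.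
Proof.
elim: n f => [|n IH] f Hf; first by rewrite !big_ord0 size_poly1.
rewrite big_ord_recr /= size_Mmonic ?IH //; last first.
  by apply: monic_neq0; apply: monic_prod.
rewrite big_ord_recr /=.
have : (0 < size (f ord_max))%N by rewrite size_poly_gt0 monic_neq0.
by move=> H; rewrite -addnS prednK.
Qed.

End Fld.

Section Main.
Variables (F : finFieldType) (m : nat) (v : 'I_m -> F).
Hypothesis Hchar : (2%:R : F) = 0.
Hypothesis Hcard : #|F| = (2 ^ m)%N.
Hypothesis Hindep : forall b : 'I_m -> bool,
      \sum_(i < m) (b i)%:R * v i = 0 -> forall i, b i = false.

Local Notation om := (omega v).

Lemma char2 (x : F) : x + x = 0.
Proof. by rewrite -mulr2n -mulr_natr Hchar mulr0. Qed.

Lemma oppc (x : F) : - x = x.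
Proof. by rewrite -[LHS]add0r -(char2 x) -addrA subrr addr0. Qed.

Lemma natb_xor (a b : bool) : ((a (+) b)%:R : F) = a%:R + b%:R.
Proof. by case: a; case: b; rewrite /= ?addr0 ?add0r ?char2. Qed.

Lemma omega_xor n a b : (a < 2 ^ n)%N -> (b < 2 ^ n)%N ->
  om (xorn n a b) = om a + om b.
Proof.
move=> Ha Hb; rewrite /omega -big_split; apply: eq_bigr => i _ /=.
by rewrite bit_xorn // natb_xor mulrDl.
Qed.

Lemma omega_blk n a k : (k < 2 ^ n)%N -> om (a * 2 ^ n + k) = om (a * 2 ^ n) + om k.
Proof.
move=> Hk; rewrite /omega -big_split; apply: eq_bigr => i _ /=.
rewrite -mulrDl; congr (_ * _).
have H0 : bit (a * 2 ^ n) i = bit (a * 2 ^ n + 0) i by rewrite addn0.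
rewrite H0 !bit_blk ?expn_gt0 // bit0n.
case: ltnP => Hi; first by rewrite add0r.
by rewrite (bit_small Hk Hi) addr0.
Qed.

Lemma omega0 : om 0 = 0.
Proof. by rewrite /omega big1 // => i _; rewrite bit0n mul0r. Qed.

Lemma bit_pow i j : bit (2 ^ i) j = (j == i).
Proof.
have -> : (2 ^ i = 1 * 2 ^ i + 0)%N by rewrite mul1n addn0.
rewrite bit_blk ?expn_gt0 // bit0n.
case: ltngtP => H //.
  by rewrite (@bit_small _ 1) // subn_gt0.
by rewrite H subnn.
Qed.

Lemma omega_pow (i : 'I_m) : om (2 ^ i) = v i.
Proof.
rewrite /omega (bigD1 i) //= big1 ?addr0; first by rewrite bit_pow eqxx mul1r.
by move=> j Hj; rewrite bit_pow val_eqE (negbTE Hj) mul0r.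
Qed.

Lemma omega_inj a b : (a < 2 ^ m)%N -> (b < 2 ^ m)%N -> om a = om b -> a = b.
Proof.
move=> Ha Hb E; apply: (bit_inj Ha Hb) => i Hi.
have Hs : \sum_(j < m) ((bit a j (+) bit b j) : bool)%:R * v j = 0.
  have : om a + om b = 0 by rewrite E char2.
  rewrite /omega -big_split => H; apply: (etrans _ H); apply: eq_bigr => j _.
  by rewrite natb_xor mulrDl.
have := Hindep (b := fun j : 'I_m => bit a j (+) bit b j) Hs (Ordinal Hi).
by rewrite /=; case: (bit a i); case: (bit b i).
Qed.

Lemma size_prodI n (G : 'I_n -> F) : size (\prod_(j < n) ('X - (G j)%:P)) = n.+1.
Proof.
rewrite size_prod_XsubC.
by rewrite -[index_enum _]filter_predT deprecated_filter_index_enum -cardE card_ord.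
Qed.

Lemma size_spoly n : size (spoly v n) = (2 ^ n).+1.
Proof. exact: size_prodI. Qed.

Lemma monic_spoly n : spoly v n \is monic.
Proof. exact: monic_prod_XsubC. Qed.

Variables (mu : nat) (Hmu : (mu <= m)%N).

Lemma lt_mu_m k : (k < 2 ^ mu)%N -> (k < 2 ^ m)%N.
Proof. by move=> H; apply: leq_trans H _; rewrite leq_pexp2l. Qed.

Lemma xorn_inj t k1 k2 : (t < 2 ^ mu)%N -> (k1 < 2 ^ mu)%N -> (k2 < 2 ^ mu)%N ->
  xorn mu t k1 = xorn mu t k2 -> k1 = k2.
Proof.
move=> Ht H1 H2 E; apply: (bit_inj H1 H2) => i _.
have := congr1 (fun x => bit x i) E; rewrite /= !bit_xorn //.
by case: (bit t i); case: (bit k1 i); case: (bit k2 i).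
Qed.

Lemma spoly_shift a t : (t < 2 ^ mu)%N -> (spoly v mu).[a + om t] = (spoly v mu).[a].
Proof.
move=> Ht; rewrite /spoly !horner_prod.
pose h (k : 'I_(2 ^ mu)) : 'I_(2 ^ mu) := Ordinal (xorn_lt mu t k).
have hinj : injective h.
  by move=> k1 k2 /(congr1 val) /= E; apply: val_inj; exact: (xorn_inj Ht (ltn_ord k1) (ltn_ord k2) E).
rewrite [RHS](reindex_inj hinj) /=; apply: eq_bigr => k _.
rewrite !hornerXsubC omega_xor //.
by rewrite opprD addrA (oppc (om t)).
Qed.

Lemma spoly_fact a : spoly v mu - ((spoly v mu).[a])%:P =
  \prod_(t < 2 ^ mu) ('X - (a + om t)%:P).
Proof.
apply/eqP; rewrite -subr_eq0; apply/eqP.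
pose rs := [seq a + om (val t) | t <- enum 'I_(2 ^ mu)].
have Hsz : size rs = (2 ^ mu)%N by rewrite size_map size_enum_ord.
apply: (@poly_eq0_roots F _ rs).
- rewrite map_inj_uniq ?enum_uniq // => t1 t2 /= /addrI /omega_inj E.
  by apply: val_inj; apply: E; apply: lt_mu_m.
- apply/allP => x /mapP [t _ ->].
  rewrite /root hornerD hornerN hornerD hornerN hornerC spoly_shift ?ltn_ord //.
  rewrite subrr horner_prod (bigD1 t) //= hornerXsubC subrr mul0r.
  by rewrite subr0.
- rewrite Hsz; apply: size_sub_monic.
  + rewrite monicE lead_coefDl ?size_polyN ?size_spoly; first exact: monic_spoly.
    by apply: leq_ltn_trans (size_polyC_leq1 _) _; rewrite ltnS expn_gt0.
  + exact: monic_prod_XsubC.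
  + rewrite size_polyDl ?size_polyN ?size_spoly //.
    by apply: leq_ltn_trans (size_polyC_leq1 _) _; rewrite ltnS expn_gt0.
  + exact: size_prodI.
Qed.

Definition Lp a := \prod_(t < 2 ^ mu | (0 < t)%N) ('X - (a + om t)%:P).

Lemma t0lt : (0 < 2 ^ mu)%N. Proof. by rewrite expn_gt0. Qed.

Lemma fact_Lp a : \prod_(t < 2 ^ mu) ('X - (a + om t)%:P) = ('X - a%:P) * Lp a.
Proof.
rewrite (bigD1 (Ordinal t0lt)) //= omega0 addr0; congr (_ * _).
by apply: eq_bigl => t; rewrite -val_eqE /= lt0n.
Qed.

Lemma term_eq a : (spoly v mu - ((spoly v mu).[a])%:P) %/ ('X - a%:P) = Lp a.
Proof.
by rewrite spoly_fact fact_Lp mulrC mulpK // monic_neq0 // monicXsubC.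
Qed.

Lemma size_Lp a : size (Lp a) = (2 ^ mu)%N.
Proof.
have := size_prodI (fun t : 'I_(2 ^ mu) => a + om t).
rewrite fact_Lp size_monicM ?monicXsubC //; last first.
  by apply: monic_neq0; apply: monic_prod_XsubC.
by rewrite size_XsubC => -[].
Qed.

Lemma Lp_root a s : (0 < s)%N -> (s < 2 ^ mu)%N -> (Lp a).[a + om s] = 0.
Proof.
move=> H0 Hs; rewrite /Lp horner_prod (bigD1 (Ordinal Hs)) //=.
by rewrite hornerXsubC subrr mul0r.
Qed.

Definition Dn n := \prod_(t < 2 ^ n | (0 < t)%N) om t.

Lemma Lp_self a : (Lp a).[a] = Dn mu.
Proof.
rewrite /Lp horner_prod; apply: eq_bigr => t _.
by rewrite hornerXsubC opprD addrA subrr add0r oppc.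
Qed.

Lemma D0 : Dn 0 = 1.
Proof.
rewrite /Dn big1 // => -[t Ht] /= Hp; move: Ht.
by rewrite expn0 ltnS leqn0 => /eqP Ht; rewrite Ht in Hp.
Qed.

Lemma om_pow_add n (Hn : (n < m)%N) t : (t < 2 ^ n)%N -> om (t + 2 ^ n) = v (Ordinal Hn) + om t.
Proof.
move=> Ht; rewrite addnC.
have := @omega_blk n 1 t Ht; rewrite !(mul1n (2 ^ n)%N) => ->.
have P := omega_pow (Ordinal Hn); rewrite /= in P; rewrite P.
reflexivity.
Qed.

Lemma DS n (Hn : (n < m)%N) : Dn n.+1 = Dn n * (spoly v n).[v (Ordinal Hn)].
Proof.
rewrite /Dn -!big_mkord expnS mul2n -addnn.
rewrite (@big_cat_nat _ _ _ (2 ^ n)) ?leq_addr //=; congr (_ * _).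
rewrite -{1}[(2 ^ n)%N]add0n big_addn addnK big_mkord.
rewrite /spoly horner_prod.
rewrite [LHS](eq_bigl xpredT); last first.
  by move=> t /=; apply: (leq_trans (expn_gt0 2 n)); rewrite leq_addl.
apply: eq_bigr => t _.
rewrite hornerXsubC (oppc (om t)).
exact: (om_pow_add Hn (ltn_ord t)).
Qed.

End Main.

Unset Implicit Arguments.
Local Open Scope ring_scope.
Section T.
Variables (F : finFieldType) (m : nat) (v : 'I_m -> F).
Hypothesis Hchar : (2%:R : F) = 0.
Local Notation om := (omega v).
Definition cc (i : 'I_m) := (spoly v i).[v i].
Lemma D_prod n : (n <= m)%N -> Dn v n = \prod_(i < m | (i < n)%N) cc i.
Proof.
elim: n => [|n IH] Hn.
  by rewrite (D0 v) big_pred0 // => i; rewrite ltn0.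
rewrite (DS v Hchar Hn) IH; last exact: ltnW.
rewrite [RHS](bigD1 (Ordinal Hn)) /=; last exact: ltnSn.
rewrite mulrC; congr (_ * _).
apply: eq_bigl => i; rewrite -val_eqE /= ltnS andbC.
by rewrite [(i < n)%N]ltn_neqAle.

Time Qed.

Hypothesis Hcard : #|F| = (2 ^ m)%N.
Hypothesis Hindep : forall b : 'I_m -> bool,
      \sum_(i < m) (b i)%:R * v i = 0 -> forall i, b i = false.

Lemma card_gt1 : (1 < #|F|)%N.
Proof.
apply/card_gt1P; exists 0, 1; split => //; by rewrite eq_sym oner_neq0.
Qed.

Lemma prod_nz : \prod_(x : F | x != 0) x = 1.
Proof.
have G := finField_genPoly F.
rewrite (bigD1 0) /= in G; last by [].
rewrite subr0 in G.
have E : 'X^#|F| - 'X = 'X * ('X^(#|F|.-1) - 1 : {poly F}).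
  rewrite mulrBr mulr1 -exprS prednK; first by [].
  exact: ltnW card_gt1.
rewrite E in G; have G2 := mulfI (negbT (polyX_eq0 _) : ('X : {poly F}) != 0) G.
have := congr1 (fun p => p.[0]) G2; rewrite /= hornerD hornerN hornerXn hornerC.
rewrite expr0n -subn1 subn_eq0 leqNgt card_gt1 /= horner_prod sub0r.
move=> H; transitivity (\prod_(x : F | x != 0) ('X - x%:P).[0]).
  by apply: eq_bigr => x _; rewrite hornerXsubC sub0r (oppc Hchar).
by rewrite -H (oppc Hchar).
Qed.

Lemma Dm : Dn v m = 1.
Proof.
rewrite /Dn; transitivity (\prod_(x : F | x != 0) x); last exact: prod_nz.
have hinj : injective (fun t : 'I_(2 ^ m) => om t).
  move=> t1 t2 /(omega_inj Hchar Hindep (ltn_ord t1) (ltn_ord t2)) E.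
  exact: val_inj.
have hbij : bijective (fun t : 'I_(2 ^ m) => om t).
  by apply: (inj_card_bij hinj); rewrite card_ord Hcard.
rewrite [RHS](reindex _ (onW_bij _ hbij)) /=; apply: eq_bigl => t.
have H0 : (0 < 2 ^ m)%N by rewrite expn_gt0.
rewrite lt0n; apply/idP/idP; apply: contra => /eqP H.
  apply/eqP; apply: (omega_inj Hchar Hindep (ltn_ord t) H0).
  by rewrite H omega0.
by rewrite H omega0.
Qed.

Lemma cc_nz i : cc i != 0.
Proof.
apply/negP => /eqP H; have := Dm; rewrite D_prod; last exact: leqnn.
rewrite (bigD1 i) /=; last exact: ltn_ord.
by rewrite H mul0r => /eqP; rewrite eq_sym oner_eq0.
Qed.

Lemma pcoef_nz k : pcoef v k != 0.
Proof.
rewrite /pcoef; apply: (big_ind (fun x => x != 0)).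
- exact: oner_neq0.
- by move=> x y; rewrite mulf_eq0 negb_or => -> ->.
- by move=> i _; rewrite expf_neq0 // cc_nz.
Qed.

Lemma size_Xbar k : (k < 2 ^ m)%N -> size (Xbar v k) = k.+1.
Proof.
move=> Hk; rewrite /Xbar size_scale; last by rewrite invr_eq0 pcoef_nz.
rewrite /Xpoly size_prod_monicn; last first.
  by move=> i; apply: monic_exp; apply: monic_spoly.
congr (_.+1); rewrite -[RHS](bin_exp Hk); apply: eq_bigr => i _.
by rewrite size_exp size_spoly /= mulnC.
Qed.

Lemma Dp mu : (mu <= m)%N -> Dn v mu * pcoef v (2 ^ m - 2 ^ mu) = 1.
Proof.
move=> Hmu.
transitivity (Dn v m); last exact: Dm.
rewrite (@D_prod m (leqnn m)) (@D_prod mu Hmu).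
rewrite /pcoef [X in _ * X](bigID (fun i : 'I_m => (i < mu)%N)) /=.
rewrite [X in _ * (X * _)]big1; last first.
  by move=> i Hi; rewrite (bit_top Hmu (ltn_ord i)) leqNgt Hi expr0.
rewrite mul1r [RHS](bigID (fun i : 'I_m => (i < mu)%N)) /=.
congr (_ * _).
  by apply: eq_bigl => i; rewrite ltn_ord.
apply: eq_big => i; first by rewrite ltn_ord.
by move=> Hi; rewrite (bit_top Hmu (ltn_ord i)) leqNgt Hi expr1.
Qed.

End T.


Theorem lemma4 (F : finFieldType) (m : nat) (v : 'I_m -> F)
  (Hchar : (2%:R : F) = 0)
  (Hcard : #|F| = (2 ^ m)%N)
  (Hindep : forall b : 'I_m -> bool,
      \sum_(i < m) (b i)%:R * v i = 0 -> forall i, b i = false)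
  (Hspan : forall x : F, exists b : 'I_m -> bool,
      x = \sum_(i < m) (b i)%:R * v i)
  (mu : nat) (Hmu : (mu <= m)%N) (r' : 'I_(2 ^ m) -> F) :
  let eps := (2 ^ mu)%N in
  let S1 : {poly F} :=
    \sum_(j < 2 ^ m)
      r' j *: ((spoly v mu - ((spoly v mu).[omega v j])%:P)
                 %/ ('X - (omega v j)%:P)) in
  let r'_le (l : nat) : 'I_(2 ^ mu) -> F :=
    fun k => at_nat r' (l * eps + k)%N in
  let sigma (j : 'I_(2 ^ mu)) : F :=
    (pcoef v (2 ^ m - 2 ^ mu))^-1 *
      \sum_(l < 2 ^ (m - mu)) IFFT v (r'_le l) (omega v (eps * l)) j in
  S1 = \sum_(j < 2 ^ mu) sigma j *: Xbar v j.
Proof.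
move=> eps S1 r'_le sigma.
pose D := Dn v mu.
have DP : D * pcoef v (2 ^ m - 2 ^ mu) = 1 := @Dp F m v Hchar Hcard Hindep mu Hmu.
have pnz : pcoef v (2 ^ m - 2 ^ mu) != 0.
  apply/eqP => E; move: DP; rewrite E mulr0 => /eqP; rewrite eq_sym oner_eq0.
  by [].
have Dnz : D != 0.
  apply/eqP => E; move: DP; rewrite E mul0r => /eqP; rewrite eq_sym oner_eq0.
  by [].
have pinv : (pcoef v (2 ^ m - 2 ^ mu))^-1 = D.
  apply: (mulIf pnz); rewrite mulVf; [by rewrite DP | exact: pnz].
have LHS : S1 = \sum_(l < 2 ^ (m - mu)) \sum_(k < 2 ^ mu)
    at_nat r' (l * 2 ^ mu + k)%N *: Lp v mu (omega v (l * 2 ^ mu + k)%N).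
  rewrite /S1.
  under eq_bigr => j _ do rewrite (term_eq Hchar Hindep Hmu).
  have E2 : (2 ^ m = 2 ^ (m - mu) * 2 ^ mu)%N by rewrite -expnD subnK.
  transitivity (\sum_(0 <= j < 2 ^ (m - mu) * 2 ^ mu)
      at_nat r' j *: Lp v mu (omega v j)); last first.
    exact: (big_blocks _ _ _ (fun j => at_nat r' j *: Lp v mu (omega v j))).
  rewrite -E2 big_mkord; apply: eq_bigr => j _.
  by rewrite /at_nat valK.
rewrite LHS /sigma /= pinv.
under [RHS]eq_bigr => j _ do rewrite -scalerA scaler_suml.
rewrite -scaler_sumr [in RHS]exchange_big /= scaler_sumr.
apply: eq_bigr => l _.
pose beta := omega v (eps * l).
have Eb : forall k : 'I_(2 ^ mu), omega v (l * 2 ^ mu + k)%N = beta + omega v k.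
  by move=> k; rewrite /beta /eps (mulnC (2 ^ mu)%N l) (omega_blk v l (ltn_ord k)).
set G := \sum_(k < 2 ^ mu) _.
have Gval : forall k' : 'I_(2 ^ mu), G.[beta + omega v k'] = r'_le l k' * D.
  move=> k'; rewrite /G horner_sum (bigD1 k') /=; last by [].
  rewrite hornerZ Eb (Lp_self v Hchar) big1 ?addr0; first by [].
  move=> k Hk; rewrite hornerZ Eb.
  have Hx : beta + omega v k' = (beta + omega v k) + omega v (xorn mu k k').
    rewrite (omega_xor v Hchar (ltn_ord k) (ltn_ord k')) addrA -(addrA beta).
    by rewrite (char2 Hchar) addr0.
  have Hpos : (0 < xorn mu k k')%N.
    rewrite lt0n; apply/negP => /eqP X0; move/negP: Hk; apply.
    apply/eqP; apply: val_inj; apply: (bit_inj (ltn_ord k) (ltn_ord k')) => i _.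
    have := bit_xorn i (ltn_ord k) (ltn_ord k'); rewrite X0 bit0n.
    by case: (bit k i); case: (bit k' i).
  by rewrite Hx (Lp_root v _ Hpos (xorn_lt mu k k')) mulr0.
have szG : (size G <= 2 ^ mu)%N.
  rewrite /G; apply: (big_ind (fun p : {poly F} => (size p <= 2 ^ mu)%N)).
  - by rewrite size_poly0.
  - move=> p q Hp Hq; apply: leq_trans (size_polyD _ _) _.
    by rewrite geq_max Hp Hq.
  - move=> k _; apply: leq_trans (size_scale_leq _ _) _.
    by rewrite size_Lp.
pose rs := [seq beta + omega v (val k) | k <- enum 'I_(2 ^ mu)].
have Hsz : size rs = (2 ^ mu)%N by rewrite size_map size_enum_ord.
have uniqq : forall q : {poly F}, (size q <= 2 ^ mu)%N ->
    (forall k : 'I_(2 ^ mu), q.[beta + omega v k] = r'_le l k) -> q = D^-1 *: G.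
  move=> q Hq Hv; apply/eqP; rewrite -subr_eq0; apply/eqP.
  apply: (@poly_eq0_roots F _ rs).
  - rewrite map_inj_uniq ?enum_uniq // => t1 t2 /= /addrI.
    move/(omega_inj Hchar Hindep (lt_mu_m Hmu (ltn_ord t1)) (lt_mu_m Hmu (ltn_ord t2))).
    exact: val_inj.
  - apply/allP => x /mapP [t _ ->].
    rewrite /root hornerD hornerN hornerZ Hv Gval mulrCA mulVf; last exact: Dnz.
    by rewrite mulr1 subrr.
  - rewrite Hsz; apply: leq_trans (size_polyD _ _) _.
    rewrite geq_max Hq size_polyN; apply: leq_trans (size_scale_leq _ _) _.
    exact: szG.
have szX : forall g : 'I_(2 ^ mu) -> F,
    (size (\sum_(k < 2 ^ mu) g k *: Xbar v k)%R <= 2 ^ mu)%N.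
  move=> g; apply: (big_ind (fun p : {poly F} => (size p <= 2 ^ mu)%N)).
  - by rewrite size_poly0.
  - move=> p q Hp Hq; apply: leq_trans (size_polyD _ _) _.
    by rewrite geq_max Hp Hq.
  - move=> k _; apply: leq_trans (size_scale_leq _ _) _.
    by rewrite (@size_Xbar F m v Hchar Hcard Hindep _ (lt_mu_m Hmu (ltn_ord k))).
rewrite /IFFT; case: pickP => [g /forallP Hg | Hn] /=.
  rewrite (uniqq _ (szX g)); last first.
    by move=> k; rewrite addrC; apply/eqP; exact: (Hg k).
  by rewrite scalerA mulfV ?scale1r.
exfalso.
have [c Hc] := @basis_exists F (Xbar v) (2 ^ mu)%N
  (fun k Hk => @size_Xbar F m v Hchar Hcard Hindep k (lt_mu_m Hmu Hk)) (D^-1 *: G)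
  (leq_trans (size_scale_leq _ _) szG).
pose g0 : {ffun 'I_(2 ^ mu) -> F} := [ffun k : 'I_(2 ^ mu) => c k].
suff : [forall j : 'I_(2 ^ mu),
        (\sum_(k < 2 ^ mu) g0 k *: Xbar v k).[omega v j + beta] == r'_le l j].
  by rewrite Hn.
apply/forallP => k; apply/eqP.
rewrite (eq_bigr (fun k : 'I_(2 ^ mu) => c k *: Xbar v k)); last by move=> k' _; rewrite ffunE.
rewrite -Hc hornerZ addrC Gval mulrCA mulVf; last exact: Dnz.
by rewrite mulr1.
Qed.
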